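(* Let $A_1,\ldots,A_N$ be real matrices, each with columns of Euclidean norm $1$, and let $k\in\mathbb{N}$. Then \[ \delta_k^{A_1\otimes\cdots\otimes A_N}\ge\max_{1\le i\le N}\delta_k^{A_i}. \]
   Context: $\otimes$ denotes the Kronecker product: for $A\in\mathbb{R}^{p,q}$, $B\in\mathbb{R}^{r,s}$, $A\otimes B\in\mathbb{R}^{pr,qs}$ is the block matrix with $(i,j)$ block $a_{i,j}B$. For $x\in\mathbb{R}^n$, $\|x\|_0$ is the number of nonzero entries of $x$. For a matrix $C\in\mathbb{R}^{m,n}$ with columns of Euclidean norm $1$, the $k$-restricted isometry constant $\delta_k^{C}$ is the smallest number $\delta$ such that $(1-\delta)\|x\|_2^2\le\|Cx\|_2^2\le(1+\delta)\|x\|_2^2$ for all $x\in\mathbb{R}^n$ with $\|x\|_0\le k$. *)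

(* Defs.v *)
From mathcomp Require Import all_boot all_order all_algebra.
From mathcomp Require Import reals.
From mathcomp Require Export mxtens.
Set Implicit Arguments. Unset Strict Implicit. Unset Printing Implicit Defensive.
Import Order.TTheory GRing.Theory Num.Theory.
Local Open Scope ring_scope.

Record mat (R : Type) := Mat { mrows : nat; mcols : nat; mval : 'M[R]_(mrows, mcols) }.
Arguments Mat {R mrows mcols}.

(* Iterated Kronecker product A_1 (x) A_2 (x) ... (x) A_N, using the standard
   Kronecker product [tensmx] of mathcomp-real-closed (row index i1*p + i2). *)
Fixpoint kronl (R : pzRingType) (s : seq (mat R)) : mat R :=
  match s with
  | [::] => Mat (1%:M : 'M[R]_1)
  | [:: A] => A
  | A :: s' => let B := kronl s' in Mat (tensmx (mval A) (mval B))
  end.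

Definition kron_family (R : pzRingType) (N : nat) (m n : 'I_N -> nat)
  (A : forall i : 'I_N, 'M[R]_(m i, n i)) : mat R :=
  kronl [seq Mat (A i) | i <- enum 'I_N].

Definition sqnorm (R : pzRingType) (p : nat) (x : 'cV[R]_p) : R :=
  \sum_(i < p) (x i 0) ^+ 2.

Definition l0 (R : pzRingType) (p : nat) (x : 'cV[R]_p) : nat :=
  #|[set i : 'I_p | x i 0 != 0]|.

Definition RIP_bound (R : realFieldType) (p q : nat) (C : 'M[R]_(p, q)) (k : nat) (d : R) :=
  forall x : 'cV[R]_q, (l0 x <= k)%N ->
    (1 - d) * sqnorm x <= sqnorm (C *m x) /\ sqnorm (C *m x) <= (1 + d) * sqnorm x.

Definition is_RIC (R : realFieldType) (p q : nat) (C : 'M[R]_(p, q)) (k : nat) (d : R) :=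
  RIP_bound C k d /\ forall d', RIP_bound C k d' -> d <= d'.

Definition unit_columns (R : realFieldType) (p q : nat) (C : 'M[R]_(p, q)) :=
  forall j : 'I_q, \sum_(i < p) (C i j) ^+ 2 = 1.

(* Main.v *)
Require Import Defs.
From mathcomp Require Import all_boot all_order all_algebra.
From mathcomp Require Import reals.
Import Order.TTheory GRing.Theory Num.Theory.
Local Open Scope ring_scope.

Fixpoint InP {T : Type} (y : T) (s : seq T) : Prop :=
  match s with [::] => False | x :: s' => x = y \/ @InP T y s' end.

Section S.
Variable R : realFieldType.

Lemma sqnorm_tens p q (u : 'cV[R]_p) (v : 'cV[R]_q) :
  sqnorm (u *t v : 'cV_(p*q)) = sqnorm u * sqnorm v.
Proof.
rewrite /sqnorm mulr_sum; apply: eq_bigr => k _.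
by rewrite mxE exprMn !(ord1 (mxtens_unindex _).1) !(ord1 (mxtens_unindex _).2).
Qed.

Lemma sqnorm_delta q (j : 'I_q) : sqnorm (delta_mx j 0 : 'cV[R]_q) = 1.
Proof.
rewrite /sqnorm (bigD1 j) //= big1 ?addr0; first by rewrite mxE !eqxx expr1n.
by move=> i /negbTE H; rewrite mxE H expr0n.
Qed.

Lemma sqnorm_col p q (B : 'M[R]_(p,q)) j :
  unit_columns B -> sqnorm (B *m delta_mx j 0) = 1.
Proof.
move=> H; rewrite -(H j) /sqnorm; apply: eq_bigr => i _.
by rewrite -colE mxE.
Qed.

Lemma l0_tensl p q (u : 'cV[R]_p) (j : 'I_q) :
  leq (l0 (u *t (delta_mx j 0 : 'cV_q) : 'cV_(p*q))) (l0 u).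
Proof.
rewrite /l0.
set S := [set _ | _].
have inj : {in S &, injective (fun k : 'I_(p*q) => (mxtens_unindex k).1)}.
  move=> a b; rewrite !inE => Ha Hb E.
  case: (mxtens_indexP a) Ha E => a1 a2; case: (mxtens_indexP b) Hb => b1 b2.
  rewrite !mxE !mxtens_indexK /= => Hb Ha E.
  have: a2 = j by apply/eqP; apply: contraNT Ha => /negbTE h; rewrite h mulr0.
  have: b2 = j by apply/eqP; apply: contraNT Hb => /negbTE h; rewrite h mulr0.
  by move=> -> ->; rewrite E.
rewrite -(card_in_imset inj); apply: subset_leq_card; apply/subsetP => x.
case/imsetP => a; rewrite !inE => Ha ->.
case: (mxtens_indexP a) Ha; move=> a1 a2; rewrite !mxE !mxtens_indexK /=.
apply: contra => h; have E1 : forall t : 'I_1, u a1 t = u a1 0 by move=> t; rewrite (ord1 t).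
by rewrite E1 (eqP h) mul0r.
Qed.

Lemma l0_tensr p q (u : 'cV[R]_p) (j : 'I_q) :
  leq (l0 ((delta_mx j 0 : 'cV_q) *t u : 'cV_(q * p))) (l0 u).
Proof.
rewrite /l0.
set S := [set _ | _].
have inj : {in S &, injective (fun k : 'I_(q * p) => (mxtens_unindex k).2)}.
  move=> a b; rewrite !inE => Ha Hb E.
  case: (mxtens_indexP a) Ha E => a1 a2; case: (mxtens_indexP b) Hb => b1 b2.
  rewrite !mxE !mxtens_indexK /= => Hb Ha E.
  have: a1 = j by apply/eqP; apply: contraNT Ha => /negbTE h; rewrite h mul0r.
  have: b1 = j by apply/eqP; apply: contraNT Hb => /negbTE h; rewrite h mul0r.
  by move=> -> ->; rewrite E.
rewrite -(card_in_imset inj); apply: subset_leq_card; apply/subsetP => x.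
case/imsetP => a; rewrite !inE => Ha ->.
case: (mxtens_indexP a) Ha; move=> a1 a2; rewrite !mxE !mxtens_indexK /=.
apply: contra => h; have E1 : forall t : 'I_1, u a2 t = u a2 0 by move=> t; rewrite (ord1 t).
by rewrite E1 (eqP h) mulr0.
Qed.

Definition emb (K M : mat R) := forall x : 'cV[R]_(mcols M), exists z : 'cV[R]_(mcols K),
  [/\ (l0 z <= l0 x)%N, sqnorm z = sqnorm x & sqnorm (mval K *m z) = sqnorm (mval M *m x)].

Lemma emb_refl M : emb M M.
Proof. by move=> x; exists x; split. Qed.

Lemma emb_left (A B : mat R) : unit_columns (mval B) -> (0 < mcols B)%N ->
  emb (Mat (mval A *t mval B)) A.
Proof.
case: B => p q B /= HB Hq x; pose j := Ordinal Hq.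
exists (x *t (delta_mx j 0 : 'cV_q) : 'cV_(_ * _)); split => /=.
- exact: l0_tensl.
- by rewrite sqnorm_tens sqnorm_delta mulr1.
- have E : (mval A *t B) *m (x *t (delta_mx j 0 : 'cV_q) : 'cV_(_ * _)) = ((mval A *m x) *t (B *m (delta_mx j 0 : 'cV_q)) : 'cV_(_ * _)) := @tensmx_mul R _ _ _ _ 1 1 (mval A) B x (delta_mx j 0).
  by rewrite E sqnorm_tens sqnorm_col // mulr1.
Qed.

Lemma emb_right (A B : mat R) M : unit_columns (mval A) -> (0 < mcols A)%N ->
  emb B M -> emb (Mat (mval A *t mval B)) M.
Proof.
case: A => p q A /= HA Hq HB x; pose j := Ordinal Hq.
have [z [h1 h2 h3]] := HB x.
exists ((delta_mx j 0 : 'cV_q) *t z : 'cV_(_ * _)); split => /=.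
- apply: leq_trans h1. apply: l0_tensr.
- by rewrite sqnorm_tens sqnorm_delta mul1r.
- have E : (A *t mval B) *m ((delta_mx j 0 : 'cV_q) *t z : 'cV_(_ * _)) = ((A *m (delta_mx j 0 : 'cV_q)) *t (mval B *m z) : 'cV_(_ * _)) := @tensmx_mul R _ _ _ _ 1 1 A (mval B) (delta_mx j 0) z.
  by rewrite E sqnorm_tens sqnorm_col // mul1r.
Qed.

Lemma unit_tens p q p' q' (A : 'M[R]_(p, q)) (B : 'M[R]_(p', q')) :
  unit_columns A -> unit_columns B -> unit_columns (A *t B).
Proof.
move=> HA HB j; case: (mxtens_indexP j) => j1 j2.
rewrite -(mul1r 1) -{1}(HA j1) -(HB j2) mulr_sum; apply: eq_bigr => k _.
by rewrite mxE mxtens_indexK exprMn.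
Qed.

Lemma unit_kronl (s : seq (mat R)) :
  (forall M, InP M s -> unit_columns (mval M)) -> unit_columns (mval (kronl s)).
Proof.
elim: s => [|A s IH] /= Hu.
  by move=> j; rewrite big_ord1 (ord1 j) mxE eqxx expr1n.
case: s IH Hu => [|B s] IH Hu; first by apply: Hu; left.
apply: unit_tens; first by apply: Hu; left.
by apply: IH => N HN; apply: Hu; right.
Qed.

Lemma emb_kronl (s : seq (mat R)) :
  (forall M, InP M s -> unit_columns (mval M)) ->
  (0 < mcols (kronl s))%N ->
  forall M, InP M s -> emb (kronl s) M.
Proof.
elim: s => [|A s IH] //= Hu Hpos M HM.
case: s IH Hu Hpos HM => [|B s] IH Hu Hpos HM.
  by case: HM => [<-|[]]; apply: emb_refl.
move: Hpos; rewrite /= muln_gt0 => /andP [pA pK].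
case: HM => [<-|HM].
  by apply: emb_left => //; apply: (@unit_kronl (B :: s)) => N HN; apply: Hu; right.
apply: emb_right => //; first by apply: Hu; left.
by apply: IH => // N HN; apply: Hu; right.
Qed.

End S.

Lemma in_map_In (T : eqType) U (f : T -> U) (s : seq T) x :
  x \in s -> InP (f x) (map f s).
Proof.
elim: s => //= y s IH; rewrite inE => /orP [/eqP ->|h]; [by left|by right; apply: IH].
Qed.

Theorem corollary3p9 (R : realType) (N : nat) (m n : 'I_N -> nat)
  (A : forall i : 'I_N, 'M[R]_(m i, n i)) (k : nat) :
  (forall i, unit_columns (A i)) ->
  forall d : R, is_RIC (mval (kron_family A)) k d ->
  forall (i : 'I_N) (di : R), is_RIC (A i) k di -> di <= d.
Proof.
move=> Hu d [Hd Hmin] i di [_ Hdi]; apply: Hdi.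
set K := kron_family A in Hd Hmin.
case: (posnP (mcols K)) => Hc.
  have : d <= d - 1.
    apply: Hmin => x _.
    have -> : sqnorm x = 0 by rewrite /sqnorm; move: x; rewrite Hc => x; rewrite big_ord0.
    have -> : sqnorm (mval K *m x) = 0.
      rewrite /sqnorm; apply: big1 => j _; rewrite mxE.
      by move: (mval K) x; rewrite Hc => M x; rewrite big_ord0 expr0n.
    by rewrite !mulr0.
  move=> h; have : d + 1 <= d by rewrite -lerBrDr. by rewrite gerDl ler10.
have E := @emb_kronl R [seq Mat (A j) | j <- enum 'I_N] _ Hc (Mat (A i)).
have {}E : emb R K (Mat (A i)).
  apply: E; last by apply: in_map_In; rewrite mem_enum.
  move=> M; elim: (enum 'I_N) => //= j s IH [<-|h]; [exact: Hu|exact: IH].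
move=> x Hx; have [z [h1 h2 h3]] := E x.
have := Hd z (leq_trans h1 Hx); by rewrite h2 h3.
Qed.
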